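(* Assume (A1). Let $1\le r\le r'\le t$ and suppose $D_1=\dots=D_t$. Then for every pair of indices $i,j\in\{1,\dots,n\}$, $$\mathbb{E}\left|\hat C^{[r]}_{ij}(t)-\hat C^{[r']}_{ij}(t)\right|\le\sqrt{\frac1r-\frac1{r'}}.$$
   Context: Let $\ell_1,\dots,\ell_n:\mathbb{R}^d\to\{-1,1\}$ be functions and $X_1,X_2,\dots$ random inputs with $X_k\sim D_k$. (A1): for every finite $t$, $(X_1,\dots,X_t)\sim\prod_{k=1}^tD_k$. Empirical correlation matrix $\hat{\bm C}^{[r]}(t)=\frac1r\sum_{k=t-r+1}^t\bm v_k\bm v_k^T$ with $\bm v_k=(\ell_1(X_k),\dots,\ell_n(X_k))^T$. *)

(* Defs.v *)
From HB Require Import structures.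
From mathcomp Require Import all_boot all_order all_algebra.
From mathcomp Require Import all_classical all_reals all_analysis.
Set Implicit Arguments. Unset Strict Implicit. Unset Printing Implicit Defensive.
Import Order.TTheory GRing.Theory Num.Theory.
Local Open Scope classical_set_scope.
Local Open Scope ring_scope.

(* Inputs live in R^d, represented as d.-tuple R with its product
   (= Borel) sigma-algebra provided by MathComp-Analysis. *)

(* (A1): for every finite t, (X_1,...,X_t) has the product law of the
   marginals D_k (the law of X_k), i.e. the joint probability of any
   measurable rectangle factorizes. *)
Definition assumption_A1 {dT} {T : measurableType dT} {R : realType}
  (P : probability T R) {dU} {U : measurableType dU} (X : nat -> T -> U) :=
  forall (t : nat) (A : nat -> set U), (forall k, measurable (A k)) ->
    P (\bigcap_(k in [set k | (1 <= k <= t)%N]) (X k @^-1` A k)) =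
    (\prod_(1 <= k < t.+1) P (X k @^-1` A k))%E.

Definition same_law_upto {dT} {T : measurableType dT} {R : realType}
  (P : probability T R) {dU} {U : measurableType dU} (X : nat -> T -> U)
  (t : nat) :=
  forall k, (1 <= k <= t)%N -> forall A : set U, measurable A ->
    P (X k @^-1` A) = P (X 1%N @^-1` A).

Definition vk {T : Type} {R : realType} {n d : nat}
  (ell : 'I_n -> d.-tuple R -> R) (X : nat -> T -> d.-tuple R) (k : nat)
  (w : T) : 'cV[R]_n := \col_i ell i (X k w).

Definition Chat {T : Type} {R : realType} {n d : nat}
  (ell : 'I_n -> d.-tuple R -> R) (X : nat -> T -> d.-tuple R)
  (r t : nat) (w : T) : 'M[R]_n :=
  (r%:R)^-1 *: \sum_(t.+1 - r <= k < t.+1) (vk ell X k w *m (vk ell X k w)^T).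

(* Main.v *)
Require Import Defs.
From HB Require Import structures.
From mathcomp Require Import all_boot all_order all_algebra.
From mathcomp Require Import all_classical all_reals all_analysis.
From mathcomp Require Import measurable_realfun ring lra zify.
Import Order.TTheory GRing.Theory Num.Theory.
Local Open Scope classical_set_scope.
Local Open Scope ring_scope.

Lemma natfacts (r r' t : nat) (hr : (1 <= r)%N) (hrr' : (r <= r')%N) (hr't : (r' <= t)%N) :
  [/\ (1 <= t.+1 - r')%N, (t.+1 - r' <= t.+1 - r)%N, (t.+1 - r <= t.+1)%N,
      (t.+1 - r - (t.+1 - r') = r' - r)%N & (t.+1 - (t.+1 - r) = r)%N].
Proof. split; lia. Qed.

Lemma fld1 (R : realType) (a b : R) : a != 0 -> b != 0 ->
  - b^-1 * (b - a) + (a^-1 - b^-1) * a = 0.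
Proof. by move=> ha hb; field; rewrite ha hb. Qed.

Lemma fld2 (R : realType) (a b : R) : a != 0 -> b != 0 ->
  (- b^-1) ^+ 2 * (b - a) + (a^-1 - b^-1) ^+ 2 * a = a^-1 - b^-1.
Proof. by move=> ha hb; field; rewrite ?ha ?hb. Qed.

Lemma sum_c (R : realType) (r r' t : nat) (hr : (1 <= r)%N) (hrr' : (r <= r')%N) (hr't : (r' <= t)%N)
  (G : nat -> R -> R) :
  \sum_(t.+1 - r' <= k < t.+1) G k ((if (t.+1 - r <= k)%N then r%:R^-1 else 0) - r'%:R^-1)
  = \sum_(t.+1 - r' <= k < t.+1 - r) G k (- r'%:R^-1) + \sum_(t.+1 - r <= k < t.+1) G k (r%:R^-1 - r'%:R^-1).
Proof.
have [h1 h2 h3 h4 h5] := natfacts r r' t hr hrr' hr't.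
rewrite (big_cat_nat h2 h3); congr (_ + _); apply: eq_big_nat => k /andP[k1 k2].
  by rewrite leqNgt k2 /= sub0r.
by rewrite k1.
Qed.

Lemma sum_c0 (R : realType) (r r' t : nat) (hr : (1 <= r)%N) (hrr' : (r <= r')%N) (hr't : (r' <= t)%N) :
  \sum_(t.+1 - r' <= k < t.+1) ((if (t.+1 - r <= k)%N then r%:R^-1 else 0) - r'%:R^-1) = 0 :> R.
Proof.
have [h1 h2 h3 h4 h5] := natfacts r r' t hr hrr' hr't.
rewrite (@sum_c R r r' t hr hrr' hr't (fun _ x => x)) !sumr_const_nat h4 h5 -(mulr_natr (- r'%:R^-1) (r' - r)) -(mulr_natr (r%:R^-1 - r'%:R^-1) r) natrB //.
have r0 : r%:R != 0 :> R by rewrite pnatr_eq0 -lt0n.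
have r'0 : r'%:R != 0 :> R by rewrite pnatr_eq0 -lt0n; lia.
exact: fld1.
Qed.

Lemma sum_c2 (R : realType) (r r' t : nat) (hr : (1 <= r)%N) (hrr' : (r <= r')%N) (hr't : (r' <= t)%N) :
  \sum_(t.+1 - r' <= k < t.+1) ((if (t.+1 - r <= k)%N then r%:R^-1 else 0) - r'%:R^-1) ^+ 2 = r%:R^-1 - r'%:R^-1 :> R.
Proof.
have [h1 h2 h3 h4 h5] := natfacts r r' t hr hrr' hr't.
rewrite (@sum_c R r r' t hr hrr' hr't (fun _ x => x ^+ 2)) !sumr_const_nat h4 h5 -(mulr_natr ((- r'%:R^-1) ^+ 2) (r' - r)) -(mulr_natr ((r%:R^-1 - r'%:R^-1) ^+ 2) r) natrB //.
have r0 : r%:R != 0 :> R by rewrite pnatr_eq0 -lt0n.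
have r'0 : r'%:R != 0 :> R by rewrite pnatr_eq0 -lt0n; lia.
exact: fld2.
Qed.
Lemma indic_Lfun (R : realType) (dT : measure_display)
  (T : measurableType dT) (P : probability T R) (A : set T) :
  measurable A -> (\1_A : T -> R) \in Lfun P 1.
Proof. by move=> mA; apply/Lfun1_integrable; exact: integrable_indic. Qed.

Lemma scale_Lfun (R : realType) (dT : measure_display)
  (T : measurableType dT) (P : probability T R) (f : T -> R) (a : R) :
  f \in Lfun P 1 -> (fun w => a * f w) \in Lfun P 1.
Proof. move=> hf; have := @Lfun_scale _ _ _ P f a 1 (lexx _). move=> H.
have -> : (fun w => a * f w) = a \o* f by apply/funext => w /=; rewrite mulrC.
exact: H. Qed.

Lemma sum_Lfun (R : realType) (dT : measure_display)
  (T : measurableType dT) (P : probability T R) (s : seq nat) (f : nat -> T -> R) :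
  (forall k, f k \in Lfun P 1) -> (fun w => \sum_(k <- s) f k w) \in Lfun P 1.
Proof.
move=> hf; elim: s => [|a s IH].
  have -> : (fun w : T => \sum_(k <- [::]) f k w) = cst 0.
    by apply/funext => w; rewrite big_nil.
  exact: Lfun_cst.
have -> : (fun w : T => \sum_(k <- a :: s) f k w) = f a + (fun w => \sum_(k <- s) f k w).
  by apply/funext => w; rewrite big_cons.
exact: rpredD.
Qed.

Lemma E_sum (R : realType) (dT : measure_display)
  (T : measurableType dT) (P : probability T R) (s : seq nat) (f : nat -> T -> R) :
  (forall k, f k \in Lfun P 1) ->
  ('E_P[fun w => (\sum_(k <- s) f k w)%R] = \sum_(k <- s) 'E_P[f k])%E.
Proof.
move=> hf; elim: s => [|a s IH].
  have -> : (fun w : T => \sum_(k <- [::]) f k w) = cst 0.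
    by apply/funext => w; rewrite big_nil.
  by rewrite expectation_cst big_nil.
have -> : (fun w : T => \sum_(k <- a :: s) f k w) = f a \+ (fun w => \sum_(k <- s) f k w).
  by apply/funext => w; rewrite big_cons.
by rewrite expectationD ?IH ?big_cons //; exact: sum_Lfun.
Qed.
Lemma Chat_entry (T : Type) (R : realType) (n d : nat)
  (ell : 'I_n -> d.-tuple R -> R) (X : nat -> T -> d.-tuple R)
  (r t : nat) (w : T) (i j : 'I_n) :
  Chat ell X r t w i j = r%:R^-1 * \sum_(t.+1 - r <= k < t.+1) ell i (X k w) * ell j (X k w).
Proof.
rewrite /Chat mxE summxE; congr (_ * _); apply: eq_bigr => k _.
by rewrite mxE big_ord1 !mxE.
Qed.

Lemma Y_indic (R : realType) (U : Type) (f : U -> R) (x : U) :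
  (f x = 1 \/ f x = -1) -> f x = 2 * \1_[set y | f y = 1] x - 1.
Proof.
rewrite indicE; case=> h.
  by rewrite mem_set //= h; lra.
rewrite memNset /= ?h; first lra.
move=> h1; move: h; rewrite h1 => h2; lra.
Qed.

Lemma sq_sum (R : realType) (s : seq nat) (a : nat -> R) :
  (\sum_(k <- s) a k) ^+ 2 = \sum_(k <- s) \sum_(l <- s) a k * a l.
Proof. by rewrite expr2 mulr_suml; apply: eq_bigr => k _; rewrite mulr_sumr. Qed.

Lemma amgm (R : realType) (z s : R) : 0 < s -> `|z| <= z ^+ 2 / (2 * s) + s / 2.
Proof.
move=> s0.
have h : 0 <= (`|z| - s) ^+ 2 by rewrite sqr_ge0.
have hz : z ^+ 2 = `|z| ^+ 2 by rewrite real_normK // num_real.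
rewrite hz.
rewrite -(@ler_pM2r _ (2 * s)); last lra.
have -> : (`|z| ^+ 2 / (2 * s) + s / 2) * (2 * s) = `|z| ^+ 2 + s * s.
  by field; rewrite gt_eqF //.
nra.
Qed.
Lemma indep2 (R : realType) (dT : measure_display)
  (T : measurableType dT) (P : probability T R) (dU : measure_display)
  (U : measurableType dU) (X : nat -> T -> U) (A1 : assumption_A1 P X)
  (B : set U) (mB : measurable B) (t k l : nat)
  (hk : (1 <= k <= t)%N) (hl : (1 <= l <= t)%N) (kl : k != l) :
  P (X k @^-1` B `&` X l @^-1` B) = (P (X k @^-1` B) * P (X l @^-1` B))%E.
Proof.
pose A m := if m == k then B else if m == l then B else setT.
have lk : (l == k) = false by rewrite eq_sym (negbTE kl).
have mA : forall m, measurable (A m).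
  by move=> m; rewrite /A; case: ifP => _ //; case: ifP.
have := A1 t A mA.
have -> : \bigcap_(m in [set m | (1 <= m <= t)%N]) X m @^-1` A m =
   X k @^-1` B `&` X l @^-1` B.
  apply/seteqP; split => w /=.
    move=> h; split.
      by have := h k hk; rewrite /A eqxx.
    by have := h l hl; rewrite /A lk eqxx.
  move=> [hkw hlw] m _; rewrite /A.
  by case: eqP => [->//|_]; case: eqP => [->//|_].
move=> ->.
rewrite (bigD1_seq k) /=; last 2 first.
  by rewrite mem_index_iota ltnS.
  exact: iota_uniq.
rewrite -big_filter (bigD1_seq l) /=; last 2 first.
  by rewrite mem_filter eq_sym kl mem_index_iota ltnS hl.
  by rewrite filter_uniq // iota_uniq.
rewrite big1_seq; last first.
  move=> m /andP[ml]; rewrite mem_filter => /andP[mk _]; rewrite /A (negbTE mk) (negbTE ml) preimage_setT.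
  exact: probability_setT.
rewrite /A eqxx lk eqxx mule1.
by [].
Qed.

Lemma E_scale_indic (R : realType) (dT : measure_display)
  (T : measurableType dT) (P : probability T R) (S : set T) (a : R) :
  measurable S -> ('E_P[fun w => (a * \1_S w)%R] = (a * fine (P S))%:E)%E.
Proof.
move=> mS.
have -> : (fun w => a * \1_S w) = a \o* \1_S by apply/funext => w /=; rewrite mulrC.
rewrite expectationZl ?indic_Lfun // expectation_indic // EFinM fineK //.
exact: fin_num_measure.
Qed.

Theorem proposition5 (R : realType) (dT : measure_display)
  (T : measurableType dT) (P : probability T R) (n d : nat)
  (ell : 'I_n -> d.-tuple R -> R)
  (ell_pm1 : forall i x, ell i x = 1 \/ ell i x = -1)
  (ell_meas : forall i, measurable_fun [set: d.-tuple R] (ell i))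
  (X : nat -> T -> d.-tuple R)
  (X_meas : forall k, measurable_fun [set: T] (X k))
  (A1 : assumption_A1 P X)
  (r r' t : nat) (hr : (1 <= r)%N) (hrr' : (r <= r')%N) (hr't : (r' <= t)%N)
  (hD : same_law_upto P X t) (i j : 'I_n) :
  ('E_P[fun w => (`|Chat ell X r t w i j - Chat ell X r' t w i j|)%R]
    <= (Num.sqrt (r%:R^-1 - r'%:R^-1))%:E)%E.
Proof.
case: (ltnP r r') => hlt; last first.
  have -> : r' = r by apply/eqP; rewrite eqn_leq hrr' hlt.
  have -> : (fun w => `|Chat ell X r t w i j - Chat ell X r t w i j|) = cst 0.
    by apply/funext => w; rewrite subrr normr0.
  by rewrite expectation_cst lee_fin sqrtr_ge0.
have [h1 h2 h3 h4 h5] := natfacts r r' t hr hrr' hr't.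
set m := (t.+1 - r')%N in h1 h2 h4 *.
set q := (t.+1 - r)%N in h2 h3 h4 h5 *.
pose B := [set x | ell i x * ell j x = 1].
have mB : measurable B.
  have := measurable_funM (ell_meas i) (ell_meas j) measurableT (measurable_set1 (1 : R)).
  by rewrite setTI.
pose A k := X k @^-1` B.
have mA : forall k, measurable (A k).
  by move=> k; have := X_meas k measurableT B mB; rewrite setTI.
pose c k : R := (if (q <= k)%N then r%:R^-1 else 0) - r'%:R^-1.
pose Z w := 2 * \sum_(m <= k < t.+1) c k * \1_(A k) w.
have eZ : forall w, Chat ell X r t w i j - Chat ell X r' t w i j = Z w.
  move=> w.
  have hY : forall k, ell i (X k w) * ell j (X k w) = 2 * \1_(A k) w - 1.
    move=> k; apply: (@Y_indic R _ (fun x => ell i x * ell j x) (X k w)).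
    by case: (ell_pm1 i (X k w)) => ->; case: (ell_pm1 j (X k w)) => ->; rewrite ?mulr1 ?mulrN1 ?opprK; auto.
  rewrite !Chat_entry -/m -/q (big_cat_nat h2 h3) /=.
  have e1 : \sum_(m <= k < t.+1) c k * (2 * \1_(A k) w - 1) = Z w.
    under eq_bigr => k _ do rewrite mulrBr mulr1.
    rewrite sumrB.
    have -> : \sum_(m <= k < t.+1) c k = 0 by exact: sum_c0.
    by rewrite subr0 /Z mulr_sumr; apply: eq_bigr => k _; ring.
  rewrite -e1 (@sum_c R r r' t hr hrr' hr't (fun k x => x * (2 * \1_(A k) w - 1))).
  rewrite -/m -/q.
  under eq_bigr => k _ do rewrite hY.
  rewrite -!mulr_sumr.
  have -> : \sum_(m <= k < q) ell i (X k w) * ell j (X k w) = \sum_(m <= k < q) (2 * \1_(A k) w - 1).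
    by apply: eq_bigr => k _; exact: hY.
  ring.
have -> : (fun w => `|Chat ell X r t w i j - Chat ell X r' t w i j|) = (fun w => `|Z w|).
  by apply/funext => w; rewrite eZ.
pose v : R := r%:R^-1 - r'%:R^-1.
have v0 : 0 < v.
  rewrite /v subr_gt0 ltf_pV2 ?posrE ?ltr0n ?ltr_nat //; lia.
pose sig := Num.sqrt v.
have sig0 : 0 < sig by rewrite sqrtr_gt0.
pose p := fine (P (A 1%N)).
have PA : forall k, (m <= k < t.+1)%N -> P (A k) = p%:E.
  move=> k hk; rewrite /p fineK ?fin_num_measure //; apply: hD => //; lia.
have PAA : forall k l, (m <= k < t.+1)%N -> (m <= l < t.+1)%N ->
    fine (P (A k `&` A l)) = if l == k then p else p * p.
  move=> k l hk hl; case: eqP => [->|/eqP lk].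
    by rewrite setIid PA.
  rewrite (@indep2 _ _ _ P _ _ X A1 B mB t k l _ _ _); last 3 first.
    lia. lia. by rewrite eq_sym.
  by rewrite PA // PA.
pose g w := \sum_(m <= k < t.+1) \sum_(m <= l < t.+1)
   (4 * c k * c l / (2 * sig)) * \1_(A k `&` A l) w + sig / 2.
have Zsq : forall w, Z w ^+ 2 / (2 * sig) + sig / 2 = g w.
  move=> w; rewrite /g /Z; congr (_ + _).
  rewrite exprMn sq_sum -mulrA mulr_suml mulr_sumr; apply: eq_bigr => k _.
  rewrite mulr_suml mulr_sumr; apply: eq_bigr => l _; rewrite indicI /=; ring.
have LZ : (fun w => Z w) \in Lfun P 1.
  apply: scale_Lfun; apply: sum_Lfun => k; apply: scale_Lfun; exact: indic_Lfun.
have Lg1 : (fun w => \sum_(m <= k < t.+1) \sum_(m <= l < t.+1)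
   (4 * c k * c l / (2 * sig)) * \1_(A k `&` A l) w) \in Lfun P 1.
  apply: sum_Lfun => k; apply: sum_Lfun => l; apply: scale_Lfun; apply: indic_Lfun.
  exact: measurableI.
have eg : g = (fun w => \sum_(m <= k < t.+1) \sum_(m <= l < t.+1)
   (4 * c k * c l / (2 * sig)) * \1_(A k `&` A l) w) \+ cst (sig / 2).
  by apply/funext.
have Lg : g \in Lfun P 1.
  by rewrite eg; apply: rpredD => //; exact: Lfun_cst.
apply: (@le_trans _ _ ('E_P[g])%E).
  rewrite unlock; apply: le_integral.
  - exact: measurableT.
  - by apply/Lfun1_integrable; exact: (Lfun_norm LZ).
  - by apply/Lfun1_integrable.
  - by move=> w _; rewrite lee_fin -Zsq; exact: amgm.
have Ein : forall k, (m <= k < t.+1)%N ->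
   ('E_P[fun w => (\sum_(m <= l < t.+1) (4 * c k * c l / (2 * sig)) * \1_(A k `&` A l) w)%R]
    = ((\sum_(m <= l < t.+1) (4 * c k * c l / (2 * sig)) * (if l == k then p else p * p))%R)%:E)%E.
  move=> k hk.
  rewrite E_sum; last by move=> l; apply: scale_Lfun; apply: indic_Lfun; exact: measurableI.
  rewrite -sumEFin; apply: eq_big_seq => l; rewrite mem_index_iota => hl.
  by rewrite E_scale_indic ?PAA //; exact: measurableI.
rewrite eg expectationD //; last exact: Lfun_cst.
rewrite expectation_cst E_sum; last first.
  by move=> k; apply: sum_Lfun => l; apply: scale_Lfun; apply: indic_Lfun; exact: measurableI.
rewrite (eq_big_seq (fun k => ((\sum_(m <= l < t.+1) (4 * c k * c l / (2 * sig)) * (if l == k then p else p * p))%R)%:E)); last first.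
  by move=> k; rewrite mem_index_iota => hk; exact: Ein.
rewrite sumEFin -EFinD lee_fin.
have sc0 : \sum_(m <= k < t.+1) c k = 0 := @sum_c0 R r r' t hr hrr' hr't.
have sc2 : \sum_(m <= k < t.+1) c k ^+ 2 = v := @sum_c2 R r r' t hr hrr' hr't.
have inner : forall k, (m <= k < t.+1)%N ->
   \sum_(m <= l < t.+1) (4 * c k * c l / (2 * sig)) * (if l == k then p else p * p)
   = c k ^+ 2 * (4 / (2 * sig) * (p - p * p)).
  move=> k hk.
  rewrite (eq_bigr (fun l => 4 * c k * p * p / (2 * sig) * c l +
     (if l == k then 4 * c k * c l / (2 * sig) * (p - p * p) else 0))); last first.
    by move=> l _; case: eqP => _; ring.
  by rewrite big_split /= -mulr_sumr sc0 mulr0 add0r -big_mkcond big_nat1_eq hk; ring.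
rewrite (eq_big_nat _ _ inner) -mulr_suml sc2.
have vs : v = sig * sig by rewrite /sig -expr2 sqr_sqrtr // ltW.
rewrite vs.
have -> : sig * sig * (4 / (2 * sig) * (p - p * p)) = 2 * sig * (p - p * p).
  by field; rewrite gt_eqF.
rewrite -/v -/sig.
have := mulr_ge0 (ltW sig0) (sqr_ge0 (2 * p - 1)).
nra.
Qed.
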